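(* Let $\mathcal P$ be a pyramid. If there exist $r>0$ and $0<\kappa<1$ such that $\operatorname{Cov}(\mathcal P;r,\kappa)=+\infty$, then there is no mm-space $X$ with $\mathcal P=\mathcal P_X$.
   Context: An mm-space is a triple $(X,d_X,\mu_X)$ with $(X,d_X)$ complete separable metric and $\mu_X$ a Borel probability measure; $\mathcal X$ is the set of mm-isomorphism classes. $Y\prec X$ means there is a 1-Lipschitz $f:X\to Y$ with $f_*\mu_X=\mu_Y$. The box distance $\square(X,Y)$ is the infimum of $\max\{\operatorname{dis}(S),1-\pi(S)\}$ over couplings $\pi$ of $\mu_X,\mu_Y$ and Borel $S\subset X\times Y$, $\operatorname{dis}(S)=\sup\{|d_X(x,x')-d_Y(y,y')|:(x,y),(x',y')\in S\}$. A pyramid is a nonempty box-closed subset of $\mathcal X$ closed downward under $\prec$ and directed; $\mathcal P_X=\{Y\in\mathcal X:Y\prec X\}$. For an mm-space $X$: $\operatorname{Cov}(X;r,\kappa)=\min\{\#\mathcal N:\mathcal N\subset X,\ \mu_X(B_r(\mathcal N))\ge1-\kappa\}$ with $B_r(\mathcal N)=\{x:d_X(x,\mathcal N)\le r\}$; for a pyramid, $\operatorname{Cov}(\mathcal P;r,\kappa)=\sup_{X\in\mathcal P}\operatorname{Cov}(X;r,\kappa)$. *)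

(* Defs.v *)
From HB Require Import structures.
From mathcomp Require Import all_boot all_order all_algebra.
From mathcomp Require Import all_classical all_reals all_analysis.
Import Order.TTheory GRing.Theory Num.Theory.

Set Implicit Arguments.
Unset Strict Implicit.
Unset Printing Implicit Defensive.

Local Open Scope classical_set_scope.
Local Open Scope ring_scope.

Definition metric_open (R : realType) (T : Type) (d : T -> T -> R)
  : set (set T) :=
  [set U | forall x, U x -> exists2 e : R, 0 < e & [set y | d x y < e] `<=` U].

Definition borelT (R : realType) (T : pointedType) (d : T -> T -> R) :=
  g_sigma_algebraType (metric_open d).

(* An mm-space: complete separable metric space with a Borel probability
   measure.  The carrier is a pointedType (it is nonempty, since it carries a
   probability measure). *)
Record mmspace (R : realType) := MMSpace {
  mm_carrier : pointedType;
  mm_dist : mm_carrier -> mm_carrier -> R;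
  mm_dist_refl : forall x, mm_dist x x = 0;
  mm_dist_sep : forall x y, mm_dist x y = 0 -> x = y;
  mm_dist_sym : forall x y, mm_dist x y = mm_dist y x;
  mm_dist_tri : forall x y z, mm_dist x z <= mm_dist x y + mm_dist y z;
  mm_complete : forall u : nat -> mm_carrier,
    (forall e : R, 0 < e -> exists N : nat, forall m n : nat,
        (N <= m)%N -> (N <= n)%N -> mm_dist (u m) (u n) < e) ->
    exists x : mm_carrier, forall e : R, 0 < e ->
        exists N : nat, forall n : nat, (N <= n)%N -> mm_dist (u n) x < e;
  mm_separable : exists s : nat -> mm_carrier,
    forall (x : mm_carrier) (e : R), 0 < e -> exists n : nat, mm_dist x (s n) < e;
  mm_measure : probability (borelT mm_dist) R }.

Arguments mm_dist {R} _ _ _.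
Arguments mm_measure {R} _.

Definition mmT (R : realType) (X : mmspace R) := borelT (mm_dist X).

(* Y ≺ X : there is a 1-Lipschitz f : X -> Y with f_* mu_X = mu_Y. *)
Definition dominates (R : realType) (Y X : mmspace R) : Prop :=
  exists f : mm_carrier X -> mm_carrier Y,
    (forall x x' : mm_carrier X, mm_dist Y (f x) (f x') <= mm_dist X x x') /\
    (forall B : set (mmT Y), measurable B ->
        mm_measure Y B = mm_measure X (f @^-1` B)).

(* Couplings of mu_X and mu_Y (Borel probability measures on X x Y; for
   separable spaces the Borel sigma-algebra of X x Y is the product one). *)
Definition coupling (R : realType) (X Y : mmspace R)
    (pi : probability (mmT X * mmT Y)%type R) : Prop :=
  (forall A : set (mmT X), measurable A -> pi (A `*` setT) = mm_measure X A) /\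
  (forall B : set (mmT Y), measurable B -> pi (setT `*` B) = mm_measure Y B).

Definition dis (R : realType) (X Y : mmspace R)
    (S : set (mm_carrier X * mm_carrier Y)) : \bar R :=
  ereal_sup [set e | exists p q, S p /\ S q /\
      e = (`| mm_dist X p.1 q.1 - mm_dist Y p.2 q.2 |)%:E].

Definition box (R : realType) (X Y : mmspace R) : \bar R :=
  ereal_inf [set e | exists (pi : probability (mmT X * mmT Y)%type R)
      (S : set (mmT X * mmT Y)),
      coupling pi /\ measurable S /\
      e = maxe (dis S) (1%E - pi S)%E].

(* Box-closedness (closedness for the box metric; in a metric space, closed
   = sequentially closed). *)
Definition box_closed (R : realType) (P : (mmspace R -> Prop)) : Prop :=
  forall (Xs : nat -> mmspace R) (X : mmspace R),
    (forall n, P (Xs n)) ->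
    (forall e : R, 0 < e -> exists N : nat, forall n : nat, (N <= n)%N ->
        (box (Xs n) X < e%:E)%E) ->
    P X.

Definition pyramid (R : realType) (P : (mmspace R -> Prop)) : Prop :=
  [/\ exists X, P X,
      box_closed P,
      (forall X Y, P X -> dominates Y X -> P Y) &
      (forall Y Y', P Y -> P Y' ->
         exists Z, [/\ P Z, dominates Y Z & dominates Y' Z])].

Definition pyramid_of (R : realType) (X : mmspace R) : (mmspace R -> Prop) :=
  fun Y => dominates Y X.

Definition rnbhd (R : realType) (X : mmspace R) (N : seq (mm_carrier X)) (r : R)
  : set (mmT X) :=
  [set x | exists2 y, y \in N & mm_dist X x y <= r].

Definition Cov (R : realType) (X : mmspace R) (r kappa : R) : \bar R :=
  ereal_inf [set ((size N)%:R)%:E | N in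
     [set N : seq (mm_carrier X) | ((1 - kappa)%:E <= mm_measure X (rnbhd N r))%E]].

Definition CovP (R : realType) (P : (mmspace R -> Prop)) (r kappa : R) : \bar R :=
  ereal_sup [set e | exists X : mmspace R, P X /\ e = Cov X r kappa].

(* Main.v *)
Require Import Defs.
From HB Require Import structures.
From mathcomp Require Import all_boot all_order all_algebra.
From mathcomp Require Import all_classical all_reals all_analysis.
From mathcomp Require Import lra.
Import Order.TTheory GRing.Theory Num.Theory.
Local Open Scope classical_set_scope.
Local Open Scope ring_scope.

Section S.
Variable R : realType.

Lemma lip_sub_meas (X : mmspace R) (g : mm_carrier X -> R)
  (hg : forall x z, g x <= g z + mm_dist X x z) (r : R) :
  measurable ([set x | g x <= r] : set (mmT X)).
Proof.
have -> : [set x | g x <= r] = ~` [set x | r < g x].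
  by apply/seteqP; split => x /=; rewrite real_ltNge ?num_real //; case: (_ <= _).
apply: measurableC; apply: sub_sigma_algebra => x /= rx.
exists (g x - r); first by rewrite subr_gt0.
move=> z /= hz.
have := hg x z; have := mm_dist_sym x z; lra.
Qed.

Lemma pre_meas (X Y : mmspace R) (f : mm_carrier X -> mm_carrier Y)
  (Lf : forall x x', mm_dist Y (f x) (f x') <= mm_dist X x x')
  (M : seq (mm_carrier Y)) r :
  measurable (f @^-1` rnbhd M r : set (mmT X)).
Proof.
elim: M => [|y M IH].
  have -> : f @^-1` rnbhd ([::] : seq (mm_carrier Y)) r = set0
    by apply/seteqP; split => x // [].
  exact: measurable0.
have -> : f @^-1` rnbhd (y :: M) r
   = [set x | mm_dist Y (f x) y <= r] `|` f @^-1` rnbhd M r.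
  apply/seteqP; split => x /=.
    move=> [z]; rewrite inE => /orP [/eqP -> |zN] h; [by left| by right; exists z].
  case=> [h|[z zN h]]; [by exists y; rewrite ?mem_head| by exists z => //; rewrite inE zN orbT].
apply: (@measurableU _ (mmT X)) => //; apply: lip_sub_meas => x z.
have := mm_dist_tri (f x) (f z) y; have := Lf x z; lra.
Qed.

Lemma rnbhd_meas (X : mmspace R) (N : seq (mm_carrier X)) r :
  measurable (rnbhd N r).
Proof. exact: (@pre_meas X X id (fun x x' => lexx _)). Qed.

Lemma Cov_le_of (Y X : mmspace R) r k (N : seq (mm_carrier X)) :
  dominates Y X -> ((1-k)%:E <= mm_measure X (rnbhd N r))%E ->
  (Cov Y r k <= (size N)%:R%:E)%E.
Proof.
case=> f [Lf Mf] h.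
apply: ereal_inf_lbound; exists (map f N); last by rewrite size_map.
rewrite /= Mf; last exact: rnbhd_meas.
apply: (le_trans h); apply: le_measure; rewrite ?inE.
- exact: rnbhd_meas.
- exact: pre_meas.
move=> x [y yN hy]; exists (f y); first exact: seq.map_f.
exact: le_trans (Lf _ _) hy.
Qed.

Lemma cov_exists (X : mmspace R) r k : 0 < r -> 0 < k ->
  exists N : seq (mm_carrier X), ((1-k)%:E <= mm_measure X (rnbhd N r))%E.
Proof.
move=> r0 k0; case: (mm_separable X) => s hs.
pose F := fun n => (rnbhd (mkseq s n) r : set (mmT X)).
have mF n : measurable (F n) by exact: rnbhd_meas.
have U : \bigcup_n F n = setT.
  rewrite -subTset => x _.
  have [n hn] := hs x r r0.
  exists n.+1 => //; rewrite /F /rnbhd /=; exists (s n); last exact: ltW.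
  by apply/seq.mapP; exists n; rewrite ?mem_iota ?add0n ?ltnSn.
have nd : nondecreasing_seq F.
  move=> n m nm; apply/subsetPset => x [y yin h]; exists y => //; move: yin.
  move=> /seq.mapP [i]; rewrite !mem_iota => /andP [_ hi] ->.
  apply/seq.mapP; exists i => //; rewrite mem_iota add0n leq0n /=; rewrite add0n in hi; exact: leq_trans hi nm.
have mU : measurable (\bigcup_n F n) by rewrite U; exact: measurableT.
have cv := nondecreasing_cvg_mu (mu := mm_measure X) mF mU nd.
have h1 : mm_measure X [set: mmT X] = 1%E by exact: probability_setT.
rewrite U in cv; rewrite [X in _ --> X](_ : _ = 1%E) in cv; last exact: probability_setT.
apply: contrapT => /forallNP hN.
have hn n : (mm_measure X (F n) <= (1-k)%:E)%E.
  by move: (hN (mkseq s n)) => /negP; rewrite -ltNge => /ltW.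
have hlim : (lim ((mm_measure X \o F) x @[x --> \oo]) <= (1-k)%:E)%E.
  apply: lime_le; first exact: cvgP cv.
  by apply: nearW => n; exact: hn.
move: hlim; rewrite (cvg_lim _ cv) // lee_fin; lra.
Qed.

End S.

Theorem corollary6p7 (R : realType) (P : (mmspace R -> Prop)) :
  pyramid P ->
  (exists r kappa : R, [/\ 0 < r, 0 < kappa, kappa < 1 &
      CovP P r kappa = +oo%E]) ->
  ~ (exists X : mmspace R, P = pyramid_of X).
Proof.
move=> _ [r [k [r0 k0 k1 hC]]] [X PX].
have [N hN] := @cov_exists R X r k r0 k0.
have : (CovP P r k <= (size N)%:R%:E)%E.
  apply: ge_ereal_sup => e [Y [PY ->]].
  rewrite PX in PY; exact: Cov_le_of PY hN.
by rewrite hC leye_eq.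
Qed.
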